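(* Let $r\ge 3$, $k\ge 2r+13$, $m=\lfloor (k-1)/2\rfloor$, $f(n)=\binom{m}{r-1}(n-m)+\binom{m}{r}+\mathbb{1}_{2\mid k}\binom{m}{r-2}$, and $$N_{k,r}=\binom{r(k-1)}{r}+\binom{m}{r-1}m-\binom{m}{r}-\mathbb{1}_{2\mid k}\binom{m}{r-2}+r(k-1).$$ Let $n>N_{k,r}$ and let $\mathcal H$ be an $n$-vertex $r$-graph with no Berge-path of length $k$ and with at least $f(n)$ hyperedges. Let $\mathcal H'$ be obtained from $\mathcal H$ by repeatedly deleting a vertex whose degree in the current hypergraph is less than $\binom{m}{r-1}$, together with all hyperedges containing it, until no such vertex remains. Then $\mathcal H'$ has at least $r(k-1)$ vertices and minimum degree at least $\binom{m}{r-1}$.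
   Context: An $r$-graph is a simple $r$-uniform hypergraph; the degree of a vertex is the number of hyperedges containing it. A Berge-path of length $t$ is an alternating sequence $v_1,e_1,\dots,e_t,v_{t+1}$ of $t+1$ distinct vertices and $t$ distinct hyperedges with $\{v_i,v_{i+1}\}\subseteq e_i$. $\mathbb{1}_{2\mid k}$ is $1$ if $k$ is even and $0$ otherwise. *)

(* Defs.v *)
From mathcomp Require Import all_boot.
Set Implicit Arguments. Unset Strict Implicit. Unset Printing Implicit Defensive.

(* An r-graph on vertex type T: a set E of hyperedges (subsets of T), each of size r.
   Simplicity (no repeated hyperedges) is automatic since E is a set. *)
Definition is_rgraph (T : finType) (r : nat) (E : {set {set T}}) : Prop :=
  forall e, e \in E -> #|e| = r.

Definition hdeg (T : finType) (E : {set {set T}}) (v : T) : nat :=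
  #|[set e in E | v \in e]|.

(* Berge-path of length t given by vertices vs = [v_0; ...; v_t] (distinct) and
   hyperedges es = [e_0; ...; e_{t-1}] (distinct, in E) with {v_i, v_{i+1}} ⊆ e_i.
   (All indices used are in range, so the default x0 of nth is irrelevant.) *)
Definition berge_path (T : finType) (E : {set {set T}}) (t : nat)
    (vs : seq T) (es : seq {set T}) : Prop :=
  [/\ size vs = t.+1, size es = t, uniq vs && uniq es,
      all (fun e => e \in E) es &
      forall (x0 : T) (i : nat), i < t ->
        (nth x0 vs i \in nth set0 es i) && (nth x0 vs i.+1 \in nth set0 es i)].

Definition has_berge_path (T : finType) (E : {set {set T}}) (t : nat) : Prop :=
  exists vs es, berge_path E t vs es.

Definition peel_step (T : finType) (d : nat)
    (H H' : {set T} * {set {set T}}) : Prop :=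
  exists2 v, v \in H.1 &
    [/\ hdeg H.2 v < d,
        H'.1 = H.1 :\ v &
        H'.2 = [set e in H.2 | v \notin e]].

Inductive peels (T : finType) (d : nat) :
    {set T} * {set {set T}} -> {set T} * {set {set T}} -> Prop :=
  | peels_refl H : peels d H H
  | peels_step H H1 H2 : peel_step d H H1 -> peels d H1 H2 -> peels d H H2.

Definition peel_result (T : finType) (d : nat)
    (H H' : {set T} * {set {set T}}) : Prop :=
  peels d H H' /\ (forall v, v \in H'.1 -> ~~ (hdeg H'.2 v < d)).

(* Main.v *)
Require Import Defs.
From mathcomp Require Import all_boot.
From mathcomp Require Import zify.

Lemma peels_inv (T : finType) (d : nat) (H H' : {set T} * {set {set T}}) :
  peels d H H' -> (forall e, e \in H.2 -> e \subset H.1) ->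
  [/\ H'.2 \subset H.2, (forall e, e \in H'.2 -> e \subset H'.1) &
      #|H.2| + (d.-1) * #|H'.1| <= #|H'.2| + (d.-1) * #|H.1|].
Proof.
elim=> {H H'} [H|H H1 H2 st _ IH] sub.
  by split=> //; apply: subxx.
case: st => v vin [hd e1 e2].
have sub1 : forall e, e \in H1.2 -> e \subset H1.1.
  move=> e; rewrite e2 e1 inE => /andP [eE ve].
  apply/subsetP => x xe; rewrite !inE (subsetP (sub e eE) x xe) andbT.
  by apply/eqP => xv; rewrite -xv xe in ve.
have [s21 s2 c] := IH sub1.
have s12 : H1.2 \subset H.2 by rewrite e2; apply/subsetP => e; rewrite inE => /andP [].
split=> //; first exact: subset_trans s21 s12.
have cE : #|H.2| = #|H1.2| + hdeg H.2 v.
  rewrite /hdeg e2 -(cardsID [set e : {set T} | v \in e] H.2) addnC; congr (_ + _).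
    by apply: eq_card => e; rewrite !inE andbC.
  by apply: eq_card => e; rewrite !inE andbC.
have cV : #|H.1| = (#|H1.1|).+1 by rewrite (cardsD1 v) vin e1.
rewrite cE cV mulnS.
have : hdeg H.2 v <= d.-1 by move: hd; case: (d).
lia.
Qed.

Lemma binlem m r : 3 <= r -> 'C(m, r) + 'C(m, r - 2) <= 'C(m.+2, r).
Proof. case: r => [|[|r']] // _. rewrite !binS /= subn2 /=. lia. Qed.

Theorem mainTheorem3 (r k : nat) (T : finType) (E : {set {set T}})
    (V' : {set T}) (E' : {set {set T}}) :
  3 <= r ->
  2 * r + 13 <= k ->
  let m := (k.-1)./2 in
  let ind := (~~ odd k : nat) in
  let n := #|T| in
  (* n > N_{k,r}; additions done before the (truncated) subtractions, so the
     value equals the integer N_{k,r} (which is positive) *)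
  ('C(r * k.-1, r) + 'C(m, r.-1) * m + r * k.-1 - 'C(m, r) - ind * 'C(m, r - 2)
     < n) ->
  is_rgraph r E ->
  ~ has_berge_path E k ->
  'C(m, r.-1) * (n - m) + 'C(m, r) + ind * 'C(m, r - 2) <= #|E| ->
  peel_result 'C(m, r.-1) ([set: T], E) (V', E') ->
  r * k.-1 <= #|V'| /\ (forall v, v \in V' -> 'C(m, r.-1) <= hdeg E' v).
Proof.
move=> hr hk m ind n hn hrg _ hE [hp hmin].
split; last by move=> v /hmin; rewrite -leqNgt.
have [s21 s2 c] := @peels_inv T _ ([set: T], E) (V', E') hp (fun e _ => subsetT e).
rewrite /= cardsT -/n in s21 s2 c.
set d := 'C(m, r.-1) in hE c hmin.
set X := 'C(m, r) + ind * 'C(m, r - 2) in hE hn.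
set L := r * k.-1 in hn *.
have hd : 1 <= d by rewrite bin_gt0 /m; lia.
rewrite leqNgt; apply/negP => hlt.
have cE' : #|E'| <= 'C(L, r).
  apply: leq_trans (_ : 'C(#|V'|, r) <= _); last by apply: leq_bin2l; lia.
  rewrite -cards_draws; apply: subset_leq_card; apply/subsetP => e eE'.
  rewrite inE s2 //= hrg ?eqxx //; exact: (subsetP s21).
have hX : X <= 'C(L, r).
  have hb : 'C(m, r) + 'C(m, r - 2) <= 'C(m.+2, r).
    exact: binlem.
  apply: leq_trans (_ : 'C(m.+2, r) <= _); last first.
    apply: leq_bin2l; rewrite /L /m.
    have h1 : 2 * k.-1 <= r * k.-1 by rewrite leq_mul2r; lia.
    have h2 : (k.-1)./2 <= k.-1 by rewrite -divn2 leq_div.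
    lia.
  apply: leq_trans hb; rewrite /X leq_add2l /ind; case: (odd k); rewrite /= ?mul1n ?mul0n ?add0n ?addn0 ?leq_addr ?leqnn //.
have hmn : m <= n.
  have : d * m <= n by move: hn hX; rewrite /X; lia.
  by apply: leq_trans; apply: leq_pmull.
move: hE; rewrite -addnA -/X mulnBr => hE.
have e1 : d.-1 * n = d * n - n by rewrite -subn1 mulnBl mul1n.
have e2 : d * m <= d * n by rewrite leq_mul2l hmn orbT.
have e3 : n <= d * n by rewrite leq_pmull.
move: hn c hX cE' hlt hE e2 e3; rewrite e1 /X /d; move: ('C(m, r.-1) * n) ('C(m, r.-1) * m) ('C(m, r.-1).-1 * #|V'|) ('C(L, r)) (ind * 'C(m, r - 2)) => a b c0 e f; move: ('C(m, r)) #|E| #|E'| #|V'| => g h i j; clearbody L n ind m; lia.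
Qed.
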